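(* Consider the ODE system $$\frac{du}{dt}=a_1u-b_1u^2-c_1uv,\qquad \frac{dv}{dt}=\frac{a_2v}{1+ku}-b_2v^2-c_2uv,$$ with positive parameters $a_1,a_2,b_1,b_2,c_1,c_2$. For every value of $k\ge0$, the system has no periodic orbits in the nonnegative quadrant $\{u\ge0,v\ge0\}$.
   Context: The state space is the biologically feasible nonnegative quadrant of population densities. *)

(* Defs.v *)
From Stdlib Require Import Reals.
Open Scope R_scope.

Definition field_u (a1 b1 c1 : R) (u v : R) : R :=
  a1 * u - b1 * u ^ 2 - c1 * u * v.
Definition field_v (a2 b2 c2 k : R) (u v : R) : R :=
  a2 * v / (1 + k * u) - b2 * v ^ 2 - c2 * u * v.

Definition is_solution (a1 a2 b1 b2 c1 c2 k : R) (u v : R -> R) : Prop :=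
  forall t : R,
    derivable_pt_lim u t (field_u a1 b1 c1 (u t) (v t)) /\
    derivable_pt_lim v t (field_v a2 b2 c2 k (u t) (v t)).

Definition periodic_orbit_in_quadrant (a1 a2 b1 b2 c1 c2 k : R)
    (u v : R -> R) : Prop :=
  is_solution a1 a2 b1 b2 c1 c2 k u v /\
  (exists T : R, 0 < T /\ forall t : R, u (t + T) = u t /\ v (t + T) = v t) /\
  (exists t1 t2 : R, (u t1, v t1) <> (u t2, v t2)) /\
  (forall t : R, 0 <= u t /\ 0 <= v t).

(* Main.v *)
Require Import Defs.
From Stdlib Require Import Reals Lra Lia ZArith Classical FunctionalExtensionality.
Open Scope R_scope.

Lemma dl_const (c x : R) : derivable_pt_lim (fun _ => c) x 0.
Proof. apply derivable_pt_lim_const. Qed.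
Lemma dl_id (x : R) : derivable_pt_lim (fun t => t) x 1.
Proof. apply derivable_pt_lim_id. Qed.
Lemma dl_plus f g x a b l : derivable_pt_lim f x a -> derivable_pt_lim g x b ->
  l = a + b -> derivable_pt_lim (fun t => f t + g t) x l.
Proof. intros H1 H2 ->. exact (derivable_pt_lim_plus f g x a b H1 H2). Qed.
Lemma dl_minus f g x a b l : derivable_pt_lim f x a -> derivable_pt_lim g x b ->
  l = a - b -> derivable_pt_lim (fun t => f t - g t) x l.
Proof. intros H1 H2 ->. exact (derivable_pt_lim_minus f g x a b H1 H2). Qed.
Lemma dl_opp f x a l : derivable_pt_lim f x a ->
  l = - a -> derivable_pt_lim (fun t => - f t) x l.
Proof. intros H1 ->. exact (derivable_pt_lim_opp f x a H1). Qed.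
Lemma dl_mult f g x a b l : derivable_pt_lim f x a -> derivable_pt_lim g x b ->
  l = a * g x + f x * b -> derivable_pt_lim (fun t => f t * g t) x l.
Proof. intros H1 H2 ->. exact (derivable_pt_lim_mult f g x a b H1 H2). Qed.
Lemma dl_div f g x a b l : derivable_pt_lim f x a -> derivable_pt_lim g x b ->
  g x <> 0 -> l = (a * g x - b * f x) / (g x * g x) ->
  derivable_pt_lim (fun t => f t / g t) x l.
Proof. intros H1 H2 H3 ->. exact (derivable_pt_lim_div f g x a b H1 H2 H3). Qed.
Lemma dl_exp f x a l : derivable_pt_lim f x a ->
  l = exp (f x) * a -> derivable_pt_lim (fun t => exp (f t)) x l.
Proof. intros H1 ->. exact (derivable_pt_lim_comp f exp x a (exp (f x)) H1 (derivable_pt_lim_exp _)). Qed.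

Lemma lim_cont f x l : derivable_pt_lim f x l -> continuity_pt f x.
Proof. intro H. apply derivable_continuous_pt. exact (exist _ l H). Qed.

Lemma per_nat (f : R -> R) T : (forall t, f (t + T) = f t) ->
  forall n t, f (t + INR n * T) = f t.
Proof.
  intros H n; induction n as [|n IH]; intro t.
  - simpl. f_equal. ring.
  - rewrite S_INR. replace (t + (INR n + 1) * T) with ((t + INR n * T) + T) by ring.
    rewrite H. apply IH.
Qed.

Lemma per_Z (f : R -> R) T : (forall t, f (t + T) = f t) ->
  forall (n : Z) t, f (t + IZR n * T) = f t.
Proof.
  intros H n t. destruct (Z_le_gt_dec 0 n) as [Hn|Hn].
  - rewrite <- (Z2Nat.id n Hn). rewrite <- INR_IZR_INZ. apply per_nat; auto.
  - assert (Hm : (0 <= - n)%Z) by lia.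
    pose proof (per_nat f T H (Z.to_nat (- n)) (t + IZR n * T)) as Hp.
    rewrite INR_IZR_INZ, Z2Nat.id in Hp by exact Hm.
    rewrite opp_IZR in Hp.
    replace (t + IZR n * T + - IZR n * T) with t in Hp by ring. auto.
Qed.

Lemma reduce T : 0 < T -> forall a t, exists n : Z, a <= t + IZR n * T <= a + T.
Proof.
  intros HT a t. set (x := (t - a) / T).
  destruct (archimed x) as [H1 H2].
  exists (1 - up x)%Z. rewrite minus_IZR.
  assert (Ht : t = a + x * T) by (unfold x; field; lra).
  rewrite Ht. split; nra.
Qed.

Lemma deriv_zero_max f c l : derivable_pt_lim f c l -> (forall x, f x <= f c) -> l = 0.
Proof.
  intros H Hm.
  pose proof (deriv_maximum f (c - 1) (c + 1) c (exist _ l H)) as D.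
  simpl in D. apply D; try lra. intros; apply Hm.
Qed.

Lemma incr_of_deriv f f' : (forall t, derivable_pt_lim f t (f' t)) -> (forall t, 0 <= f' t) ->
  forall a b, a <= b -> f a <= f b.
Proof.
  intros Hd Hp a b Hab. destruct (Req_dec a b) as [->|Hne]; [lra|].
  destruct (MVT_cor2 f f' a b) as [c [Hc _]]; [lra| intros; apply Hd |].
  specialize (Hp c). nra.
Qed.

Lemma decr_of_deriv f f' : (forall t, derivable_pt_lim f t (f' t)) -> (forall t, f' t <= 0) ->
  forall a b, a <= b -> f b <= f a.
Proof.
  intros Hd Hp a b Hab. destruct (Req_dec a b) as [->|Hne]; [lra|].
  destruct (MVT_cor2 f f' a b) as [c [Hc _]]; [lra| intros; apply Hd |].
  specialize (Hp c). nra.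
Qed.

Lemma const_of_zero_deriv f : (forall t, derivable_pt_lim f t 0) -> forall a b, f a = f b.
Proof.
  intros Hd a b.
  assert (forall a b, a <= b -> f a = f b).
  { intros x y Hxy. apply Rle_antisym.
    - apply (incr_of_deriv f (fun _ => 0)); auto; intros; lra.
    - apply (decr_of_deriv f (fun _ => 0)); auto; intros; lra. }
  destruct (Rle_dec a b); [auto| symmetry; apply H; lra].
Qed.

Lemma mono_const f T : 0 < T -> (forall t, f (t + T) = f t) ->
  ((forall a b, a <= b -> f a <= f b) \/ (forall a b, a <= b -> f b <= f a)) ->
  forall t s, f t = f s.
Proof.
  intros HT Hp Hm t s.
  destruct (reduce T HT s t) as [n Hn].
  rewrite <- (per_Z f T Hp n t).
  pose proof (Hp s) as Hs.
  destruct Hm as [Hm|Hm].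
  - pose proof (Hm s (t + IZR n * T) (proj1 Hn)).
    pose proof (Hm (t + IZR n * T) (s + T) (proj2 Hn)). lra.
  - pose proof (Hm s (t + IZR n * T) (proj1 Hn)).
    pose proof (Hm (t + IZR n * T) (s + T) (proj2 Hn)). lra.
Qed.

Lemma sign_const (g : R -> R) : (forall t, continuity_pt g t) -> (forall t, g t <> 0) ->
  (forall t, 0 < g t) \/ (forall t, g t < 0).
Proof.
  intros Hc Hn.
  assert (Hs : forall t, 0 < g t * g 0).
  { intro t. destruct (Rlt_or_le 0 (g t * g 0)) as [h|h]; auto. exfalso.
    destruct (Rle_dec t 0).
    - destruct (IVT_cor g t 0 Hc r h) as [z [_ Hz]]. exact (Hn z Hz).
    - destruct (IVT_cor g 0 t Hc) as [z [_ Hz]]; [lra| nra |]. exact (Hn z Hz). }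
  destruct (Rlt_or_le 0 (g 0)) as [h|h].
  - left. intro t. specialize (Hs t). nra.
  - right. intro t. specialize (Hs t). assert (g 0 <> 0) by apply Hn. nra.
Qed.

Lemma nonvanish (x g : R -> R) T : 0 < T ->
  (forall t, derivable_pt_lim x t (x t * g t)) -> (forall t, continuity_pt g t) ->
  (forall t, g t <> 0) -> (forall t, x (t + T) = x t) -> (forall t, 0 <= x t) ->
  forall t, x t = 0.
Proof.
  intros HT Hd Hc Hn Hp Hnn.
  assert (Hk : forall t s, x t = x s).
  { apply (mono_const x T HT Hp).
    destruct (sign_const g Hc Hn) as [Hg|Hg].
    - left. apply (incr_of_deriv x (fun t => x t * g t)); auto.
      intro t. specialize (Hg t). specialize (Hnn t). nra.
    - right. apply (decr_of_deriv x (fun t => x t * g t)); auto.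
      intro t. specialize (Hg t). specialize (Hnn t). nra. }
  intro t.
  assert (Hf : x = fun _ => x t) by (apply functional_extensionality; intro; apply Hk).
  pose proof (Hd t) as D. rewrite Hf in D at 1.
  pose proof (uniqueness_limite _ _ _ _ D (dl_const (x t) t)) as E.
  specialize (Hn t). apply Rmult_integral in E. tauto.
Qed.

Lemma last_zero (f : R -> R) r s : (forall t, continuity_pt f t) -> r < s -> f r <= 0 -> 0 < f s ->
  exists z, r <= z < s /\ f z = 0 /\ forall t, z < t <= s -> 0 < f t.
Proof.
  intros Hc Hrs Hr Hs.
  set (E := fun t => r <= t <= s /\ f t = 0).
  assert (HE : exists t, E t).
  { destruct (IVT_cor f r s Hc) as [z [Hz1 Hz2]]; [lra|nra|]. exists z. split; auto. }
  assert (HB : bound E) by (exists s; intros t [Ht _]; lra).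
  destruct (completeness E HB HE) as [z [Hub Hlub]].
  destruct HE as [t0 Ht0].
  assert (Hz0 : r <= z <= s).
  { split. - pose proof (Hub t0 Ht0). destruct Ht0; lra.
    - apply Hlub. intros t [Ht _]; lra. }
  assert (Hfz : f z = 0).
  { destruct (Req_dec (f z) 0) as [h|h]; auto. exfalso.
    destruct (continuous_neq_0 f z (Hc z) h) as [eps He].
    assert (z <= z - eps / 2).
    { apply Hlub. intros t Et. pose proof (Hub t Et) as Htz.
      destruct (Rle_dec t (z - eps/2)) as [h1|h1]; auto. exfalso.
      destruct Et as [_ Et]. apply (He (t - z)).
      - apply Rabs_def1; destruct eps; simpl in *; lra.
      - replace (z + (t - z)) with t by ring. auto. }
    destruct eps; simpl in *; lra. }
  exists z. split; [|split; [exact Hfz|]].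
  - split; [lra|]. destruct (Req_dec z s) as [->|h]; [lra|lra].
  - intros t Ht. destruct (Rlt_or_le 0 (f t)) as [h|h]; auto. exfalso.
    destruct (IVT_cor f t s Hc) as [w [Hw1 Hw2]]; [lra|nra|].
    assert (E w) by (split; [lra|auto]). pose proof (Hub w H). lra.
Qed.

Lemma gronwall (E E' : R -> R) L : (forall t, derivable_pt_lim E t (E' t)) ->
  (forall t, 0 <= E t) -> (forall t, E' t <= L * E t) -> forall t0, E t0 = 0 ->
  forall t, t0 <= t -> E t = 0.
Proof.
  intros Hd Hn Hb t0 H0 t Ht.
  set (H := fun t => E t * exp (- (L * t))).
  set (H' := fun t => E' t * exp (- (L * t)) + E t * (exp (- (L * t)) * - (L * 1 + 0 * t))).
  assert (Hd' : forall t, derivable_pt_lim H t (H' t)).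
  { intro s. unfold H, H'. eapply dl_mult; [apply Hd| |reflexivity].
    eapply dl_exp; [|reflexivity]. eapply dl_opp; [|reflexivity].
    eapply dl_mult; [apply dl_const|apply dl_id|ring]. }
  assert (Hdec : forall t, H' t <= 0).
  { intro s. unfold H'. pose proof (exp_pos (- (L * s))). specialize (Hb s). nra. }
  pose proof (decr_of_deriv H H' Hd' Hdec t0 t Ht) as Hle.
  unfold H in Hle. rewrite H0 in Hle. pose proof (exp_pos (- (L * t))). specialize (Hn t). nra.
Qed.

Lemma key_ineq p q P Q u v b1 b2 c1 g G : 0 <= u -> 0 <= v -> 0 <= b1 -> 0 <= b2 -> 0 <= c1 ->
  0 <= g -> g <= G ->
  2*p*(p*P + u*(-b1*p - c1*q)) + 2*q*(q*Q + v*(-g*p - b2*q)) <=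
  (2*(1+P*P) + 2*(1+Q*Q) + c1*u + G*v) * (p*p+q*q).
Proof.
  intros hu hv hb1 hb2 hc1 hg hG.
  assert (A1 : 0 <= (1 + P*P - P) * (p*p)) by (apply Rmult_le_pos; nra).
  assert (A2 : 0 <= (1 + Q*Q - Q) * (q*q)) by (apply Rmult_le_pos; nra).
  assert (A3 : 0 <= b1*u*(p*p)) by (apply Rmult_le_pos; nra).
  assert (A4 : 0 <= b2*v*(q*q)) by (apply Rmult_le_pos; nra).
  assert (A5 : 0 <= c1*u*((p+q)*(p+q))) by (apply Rmult_le_pos; [apply Rmult_le_pos; auto| apply Rle_0_sqr]).
  assert (A6 : 0 <= g*v*((p+q)*(p+q))) by (apply Rmult_le_pos; [apply Rmult_le_pos; auto| apply Rle_0_sqr]).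
  assert (A7 : 0 <= (G-g)*v*(p*p+q*q)) by (apply Rmult_le_pos; nra).
  assert (A8 : 0 <= (1+P*P)*(q*q)) by (apply Rmult_le_pos; nra).
  assert (A9 : 0 <= (1+Q*Q)*(p*p)) by (apply Rmult_le_pos; nra).
  match goal with |- ?L <= ?R => assert (E : R - L = 2*((1 + P*P - P) * (p*p)) + 2*((1+P*P)*(q*q))
    + 2*((1 + Q*Q - Q) * (q*q)) + 2*((1+Q*Q)*(p*p)) + c1*u*((p+q)*(p+q)) + (G-g)*v*(p*p+q*q)
    + g*v*((p+q)*(p+q)) + 2*(b1*u*(p*p)) + 2*(b2*v*(q*q))) by ring end.
  lra.
Qed.

Theorem mainTheorem6 (a1 a2 b1 b2 c1 c2 : R)
  (ha1 : 0 < a1) (ha2 : 0 < a2) (hb1 : 0 < b1) (hb2 : 0 < b2)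
  (hc1 : 0 < c1) (hc2 : 0 < c2) (k : R) (hk : 0 <= k) :
  forall u v : R -> R, ~ periodic_orbit_in_quadrant a1 a2 b1 b2 c1 c2 k u v.
Proof.
  intros u v [Hsol [[T [HT Hper]] [[t1 [t2 Hne]] Hnn]]].
  assert (pu : forall t, u (t + T) = u t) by (intro; apply Hper).
  assert (pv : forall t, v (t + T) = v t) by (intro; apply Hper).
  assert (Hpos : forall t, 0 < 1 + k * u t) by (intro t; destruct (Hnn t); nra).
  pose (P := fun t => a1 - b1 * u t - c1 * v t).
  pose (Q := fun t => a2 / (1 + k * u t) - b2 * v t - c2 * u t).
  pose (g := fun t => a2 * k / ((1 + k * u t) * (1 + k * u t)) + c2).
  assert (du : forall t, derivable_pt_lim u t (u t * P t)).
  { intro t. destruct (Hsol t) as [H _]. unfold field_u in H.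
    replace (u t * P t) with (a1 * u t - b1 * u t ^ 2 - c1 * u t * v t) by (unfold P; ring). exact H. }
  assert (dv : forall t, derivable_pt_lim v t (v t * Q t)).
  { intro t. destruct (Hsol t) as [_ H]. unfold field_v in H.
    replace (v t * Q t) with (a2 * v t / (1 + k * u t) - b2 * v t ^ 2 - c2 * u t * v t).
    exact H. unfold Q. specialize (Hpos t). field. lra. }
  Ltac dtac du dv := repeat first [ apply dl_const | apply dl_id | apply du | apply dv
     | eapply dl_plus | eapply dl_minus | eapply dl_opp | eapply dl_div | eapply dl_mult ].
  Ltac evtac := repeat match goal with |- ?x = _ => is_evar x; reflexivity end.
  assert (dP : forall t, derivable_pt_lim P t (- b1 * (u t * P t) - c1 * (v t * Q t))).
  { intro t. unfold P at 1. dtac du dv; evtac. ring. }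
  assert (dQ : forall t, derivable_pt_lim Q t (- g t * (u t * P t) - b2 * (v t * Q t))).
  { intro t. unfold Q at 1. dtac du dv; evtac.
    - specialize (Hpos t). lra.
    - unfold g. specialize (Hpos t). field. lra. }
  pose (W := fun t => P t * Q t).
  pose (W' := fun t => - (b1 * u t + b2 * v t) * W t - c1 * v t * (Q t * Q t) - g t * u t * (P t * P t)).
  assert (dW : forall t, derivable_pt_lim W t (W' t)).
  { intro t. unfold W at 1. eapply dl_mult; [apply dP|apply dQ|]. unfold W', W. ring. }
  assert (gpos : forall t, 0 < g t).
  { intro t. unfold g. specialize (Hpos t).
    assert (0 <= a2 * k / ((1 + k * u t) * (1 + k * u t))).
    { apply Rmult_le_pos; [nra|]. left. apply Rinv_0_lt_compat. nra. }
    lra. }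
  assert (Wdec : forall t, 0 <= W t -> W' t <= 0).
  { intros t Ht. unfold W'. destruct (Hnn t) as [h1 h2]. specialize (gpos t).
    assert (0 <= c1 * v t * (Q t * Q t)) by (apply Rmult_le_pos; nra).
    assert (0 <= g t * u t * (P t * P t)) by (apply Rmult_le_pos; nra).
    assert (0 <= (b1 * u t + b2 * v t) * W t) by (apply Rmult_le_pos; nra).
    lra. }
  assert (pZu : forall n t, u (t + IZR n * T) = u t) by (apply per_Z; auto).
  assert (pZv : forall n t, v (t + IZR n * T) = v t) by (apply per_Z; auto).
  assert (pZP : forall n t, P (t + IZR n * T) = P t) by (intros; unfold P; rewrite pZu, pZv; auto).
  assert (pZQ : forall n t, Q (t + IZR n * T) = Q t) by (intros; unfold Q; rewrite pZu, pZv; auto).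
  assert (pZW : forall n t, W (t + IZR n * T) = W t) by (intros; unfold W; rewrite pZP, pZQ; auto).
  assert (cP : forall t, continuity_pt P t) by (intro t; exact (lim_cont _ _ _ (dP t))).
  assert (cQ : forall t, continuity_pt Q t) by (intro t; exact (lim_cont _ _ _ (dQ t))).
  assert (cW : forall t, continuity_pt W t) by (intro t; exact (lim_cont _ _ _ (dW t))).
  destruct (classic (exists t0, W t0 = 0)) as [[t0 H0]|Hnz].
  2:{ assert (HP : forall t, P t <> 0).
      { intros t h. apply Hnz. exists t. unfold W. rewrite h. ring. }
      assert (HQ : forall t, Q t <> 0).
      { intros t h. apply Hnz. exists t. unfold W. rewrite h. ring. }
      assert (u0 := nonvanish u P T HT du cP HP pu (fun t => proj1 (Hnn t))).
      assert (v0 := nonvanish v Q T HT dv cQ HQ pv (fun t => proj2 (Hnn t))).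
      apply Hne. rewrite !u0, !v0. reflexivity. }
  assert (Wle : forall s, W s <= 0).
  { intro s. destruct (Rle_or_lt (W s) 0) as [h|h]; auto. exfalso.
    destruct (reduce T HT (s - T) t0) as [n Hn].
    set (r := t0 + IZR n * T) in *.
    assert (Wr : W r = 0) by (unfold r; rewrite pZW; auto).
    assert (Hrs : r < s).
    { destruct (Req_dec r s) as [e|e]; [rewrite e in Wr; lra| lra]. }
    destruct (last_zero W r s cW Hrs ltac:(lra) h) as [z [Hz [Wz Hpz]]].
    destruct (MVT_cor2 W W' z s) as [c [Hc Hc2]]; [lra| intros; apply dW|].
    assert (W' c <= 0) by (apply Wdec; left; apply Hpz; lra).
    nra. }
  assert (W'0 : W' t0 = 0).
  { apply (deriv_zero_max W t0 (W' t0) (dW t0)). intro x. rewrite H0. apply Wle. }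
  assert (Hp0 : u t0 * P t0 = 0 /\ v t0 * Q t0 = 0).
  { unfold W' in W'0. fold (W t0) in W'0. rewrite H0 in W'0.
    destruct (Hnn t0) as [h1 h2]. specialize (gpos t0). specialize (hc1).
    assert (A1 : 0 <= c1 * v t0 * (Q t0 * Q t0)) by (apply Rmult_le_pos; nra).
    assert (A2 : 0 <= g t0 * u t0 * (P t0 * P t0)) by (apply Rmult_le_pos; nra).
    assert (B1 : c1 * v t0 * (Q t0 * Q t0) = 0) by lra.
    assert (B2 : g t0 * u t0 * (P t0 * P t0) = 0) by lra.
    split.
    - destruct (Req_dec (u t0) 0) as [e|e]; [rewrite e; ring|].
      destruct (Req_dec (P t0) 0) as [e'|e']; [rewrite e'; ring|].
      exfalso. assert (0 < g t0 * u t0 * (P t0 * P t0)).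
      { apply Rmult_lt_0_compat; [apply Rmult_lt_0_compat; lra|].
        exact (Rsqr_pos_lt _ e'). }
      lra.
    - destruct (Req_dec (v t0) 0) as [e|e]; [rewrite e; ring|].
      destruct (Req_dec (Q t0) 0) as [e'|e']; [rewrite e'; ring|].
      exfalso. assert (0 < c1 * v t0 * (Q t0 * Q t0)).
      { apply Rmult_lt_0_compat; [apply Rmult_lt_0_compat; lra|].
        exact (Rsqr_pos_lt _ e'). }
      lra. }
  Ltac dtac4 du dv dP dQ := repeat first [ apply dl_const | apply dl_id | apply du | apply dv
     | apply dP | apply dQ
     | eapply dl_plus | eapply dl_minus | eapply dl_opp | eapply dl_div | eapply dl_mult ].
  pose (E := fun t => (u t * P t) * (u t * P t) + (v t * Q t) * (v t * Q t)).
  pose (E' := fun t => 2*(u t*P t)*((u t*P t)*P t + u t*(-b1*(u t*P t) - c1*(v t*Q t)))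
     + 2*(v t*Q t)*((v t*Q t)*Q t + v t*(-g t*(u t*P t) - b2*(v t*Q t)))).
  assert (dE : forall t, derivable_pt_lim E t (E' t)).
  { intro t. unfold E at 1. dtac4 du dv dP dQ; evtac. unfold E'. ring. }
  pose (K := fun t => 2*(1+P t*P t) + 2*(1+Q t*Q t) + c1*u t + (a2*k+c2)*v t).
  assert (cK : forall t, continuity_pt K t).
  { intro t. eapply lim_cont. unfold K. dtac4 du dv dP dQ; evtac. }
  assert (gle : forall t, g t <= a2 * k + c2).
  { intro t. unfold g. specialize (Hpos t).
    assert (1 <= (1 + k * u t) * (1 + k * u t)) by (destruct (Hnn t); nra).
    assert (/ ((1 + k * u t) * (1 + k * u t)) <= 1).
    { rewrite <- Rinv_1. apply Rinv_le_contravar; lra. }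
    unfold Rdiv. assert (0 <= a2 * k) by nra. nra. }
  assert (EK : forall t, E' t <= K t * E t).
  { intro t. unfold E', K, E. destruct (Hnn t).
    apply key_ineq; try lra. left; apply gpos. apply gle. }
  destruct (continuity_ab_maj K t0 (t0 + T)) as [Mx [HM _]]; [lra| intros; apply cK|].
  assert (pZK : forall n t, K (t + IZR n * T) = K t)
    by (intros; unfold K; rewrite pZu, pZv, pZP, pZQ; auto).
  assert (pZE : forall n t, E (t + IZR n * T) = E t)
    by (intros; unfold E; rewrite pZu, pZv, pZP, pZQ; auto).
  assert (KL : forall t, K t <= K Mx).
  { intro t. destruct (reduce T HT t0 t) as [n Hn]. rewrite <- (pZK n t). apply HM. lra. }
  assert (Enn : forall t, 0 <= E t).
  { intro t. unfold E. pose proof (Rle_0_sqr (u t * P t)). pose proof (Rle_0_sqr (v t * Q t)).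
    unfold Rsqr in *. lra. }
  assert (EL : forall t, E' t <= K Mx * E t).
  { intro t. pose proof (EK t). pose proof (KL t). pose proof (Enn t). nra. }
  assert (E0 : E t0 = 0) by (unfold E; destruct Hp0 as [-> ->]; ring).
  pose proof (gronwall E E' (K Mx) dE Enn EL t0 E0) as G.
  assert (Eall : forall t, E t = 0).
  { intro t. destruct (reduce T HT t0 t) as [n Hn]. rewrite <- (pZE n t). apply G. lra. }
  assert (up0 : forall t, derivable_pt_lim u t 0).
  { intro t. pose proof (du t) as D. pose proof (Eall t) as Et. unfold E in Et.
    pose proof (Rle_0_sqr (u t * P t)). pose proof (Rle_0_sqr (v t * Q t)). unfold Rsqr in *.
    assert (Z1 : u t * P t * (u t * P t) = 0) by lra.
    assert (Z2 : u t * P t = 0) by (apply Rmult_integral in Z1; tauto).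
    rewrite Z2 in D. exact D. }
  assert (vp0 : forall t, derivable_pt_lim v t 0).
  { intro t. pose proof (dv t) as D. pose proof (Eall t) as Et. unfold E in Et.
    pose proof (Rle_0_sqr (u t * P t)). pose proof (Rle_0_sqr (v t * Q t)). unfold Rsqr in *.
    assert (Z1 : v t * Q t * (v t * Q t) = 0) by lra.
    assert (Z2 : v t * Q t = 0) by (apply Rmult_integral in Z1; tauto).
    rewrite Z2 in D. exact D. }
  apply Hne. rewrite (const_of_zero_deriv u up0 t1 t2), (const_of_zero_deriv v vp0 t1 t2).
  reflexivity.
Qed.
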